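(* Fix $\beta>0$ and for positive integers $p$ set $x_p=\beta^p/(\beta+1)^{p+1}$. Then $$\Phi_\beta(p,0)=\frac{\beta}{\beta+1}(1+x_p)+x_p\,\varepsilon_p,$$ where $\varepsilon_p\to 0$ as $p\to\infty$.
   Context: For $\beta>0$, $W_\beta$ is the random walk on $\mathbb{Z}^2$ starting at the origin which, independently at each step, moves from $(a,b)$ to $(a+1,b)$ with probability $1/(\beta+1)$ and to $(a,b+1)$ with probability $\beta/(\beta+1)$. For a nonnegative integer $p$, $\Phi_\beta(p,0)$ is the probability that $W_\beta$ visits at least one of the lattice points $(n,pn+1)$, $n\ge 0$. *)

(* Defs.v *)
From Stdlib Require Import Reals Arith.
Open Scope R_scope.

Definition is_target (p a b : nat) : bool := Nat.eqb b (p * a + 1)%nat.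

(* hit_within beta p N a b = probability that the walk W_beta started at
   (a,b) visits a target point at one of the times 0,1,...,N.
   A step goes to (a+1,b) w.p. 1/(beta+1) and to (a,b+1) w.p. beta/(beta+1). *)
Fixpoint hit_within (beta : R) (p : nat) (N a b : nat) : R :=
  if is_target p a b then 1 else
  match N with
  | O => 0
  | S N' => / (beta + 1) * hit_within beta p N' (S a) b
            + beta / (beta + 1) * hit_within beta p N' a (S b)
  end.

(* Phi_beta(p,0) = v : the probability that W_beta (from the origin) ever visits
   a target is v, i.e. the limit of the finite-horizon hitting probabilities
   (continuity of probability along the increasing events). *)
Definition Phi_is (beta : R) (p : nat) (v : R) : Prop :=
  Un_cv (fun N => hit_within beta p N 0%nat 0%nat) v.

Definition x_p (beta : R) (p : nat) : R := beta ^ p / (beta + 1) ^ (S p).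

(* Main.v *)
Require Import Defs.
From Stdlib Require Import Reals Arith Lra Lia Psatz.
Open Scope R_scope.

Section S.
Variable beta : R.
Hypothesis hb : 0 < beta.
Variable p : nat.

Lemma r_pos : 0 < / (beta + 1). Proof. apply Rinv_0_lt_compat; lra. Qed.
Lemma q_pos : 0 < beta / (beta + 1). Proof. unfold Rdiv; pose proof r_pos; nra. Qed.
Lemma rq1 : / (beta + 1) + beta / (beta + 1) = 1. Proof. field; lra. Qed.

Lemma hit_nonneg : forall N a b, 0 <= hit_within beta p N a b.
Proof.
  induction N; intros a b; simpl; destruct (is_target p a b); try lra.
  pose proof r_pos; pose proof q_pos; pose proof (IHN (S a) b); pose proof (IHN a (S b)); nra.
Qed.

Lemma hit_grow : forall N a b, hit_within beta p N a b <= hit_within beta p (S N) a b.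
Proof.
  pose proof r_pos; pose proof q_pos.
  induction N; intros a b.
  - cbn [hit_within]. destruct (is_target p a b); try lra.
    pose proof (hit_nonneg 0 (S a) b); pose proof (hit_nonneg 0 a (S b)). cbn [hit_within] in *. nra.
  - cbn [hit_within] in *. destruct (is_target p a b); try lra.
    pose proof (IHN (S a) b); pose proof (IHN a (S b)). cbn [hit_within] in *. nra.
Qed.

Section Super.
Variable t : R.
Hypothesis ht0 : 0 < t.
Hypothesis ht1 : t <= 1.
Hypothesis hts : beta / (beta + 1) + / (beta + 1) * t ^ (S p) <= t.

Definition U (a b : nat) : R := t ^ (p * a + 1 - b).

Lemma pow_le1 : forall x n, 0 <= x -> x <= 1 -> x ^ n <= 1.
Proof. intros x n H0 H1; induction n; simpl; [lra|]. nra. Qed.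

Lemma U_le1 : forall a b, U a b <= 1.
Proof. intros; unfold U; apply pow_le1; lra. Qed.

Lemma hit_le_U : forall N a b, hit_within beta p N a b <= U a b.
Proof.
  pose proof r_pos as Hr; pose proof q_pos as Hq; pose proof rq1 as H1.
  induction N; intros a b; simpl; destruct (is_target p a b) eqn:E.
  - unfold U; apply Rle_refl || (apply Nat.eqb_eq in E; rewrite E; replace (p*a+1-(p*a+1))%nat with 0%nat by lia; simpl; lra).
  - left; unfold U; apply pow_lt; lra.
  - apply Nat.eqb_eq in E; unfold U; rewrite E; replace (p*a+1-(p*a+1))%nat with 0%nat by lia; simpl; lra.
  - apply Nat.eqb_neq in E.
    pose proof (IHN (S a) b) as A; pose proof (IHN a (S b)) as B.
    destruct (le_lt_dec (p*a+2) b) as [Hl|Hl].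
    + assert (U a b = 1) by (unfold U; replace (p*a+1-b)%nat with 0%nat by lia; reflexivity).
      pose proof (U_le1 (S a) b); pose proof (U_le1 a (S b)). nra.
    + assert (Hk: exists k, (p * a + 1 - b = S k)%nat /\ (p*a+1 - S b = k)%nat /\ (p * S a + 1 - b = S k + p)%nat).
      { exists (p*a - b)%nat. rewrite Nat.mul_succ_r. lia. }
      destruct Hk as [k [K1 [K2 K3]]].
      unfold U in *. rewrite K1. rewrite K2 in B. rewrite K3 in A.
      rewrite pow_add in A.
      assert (t ^ S k * t ^ p = t ^ k * t ^ S p) by (rewrite <- !pow_add; f_equal; lia).
      assert (0 < t ^ k) by (apply pow_lt; lra).
      simpl (t ^ S k) at 1.
      apply Rle_trans with (/ (beta + 1) * (t ^ k * t ^ S p) + beta / (beta + 1) * t ^ k).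
      * rewrite <- H. nra.
      * nra.
Qed.
End Super.
End S.


Lemma powup : forall y n, 0 <= y -> (1+y)^n <= 1 + INR n * y * (1+y)^n.
Proof.
  intros y n Hy; induction n.
  - simpl; lra.
  - rewrite S_INR. simpl (_ ^ S n).
    assert (1 <= (1+y)^n) by (apply pow_R1_Rle; lra).
    assert (0 <= INR n) by apply pos_INR. nra.
Qed.

Lemma powup2 : forall y n, 0 <= y -> INR n * y <= 1/2 -> (1+y)^n <= 1 + 2 * INR n * y.
Proof.
  intros y n Hy Hn. pose proof (powup y n Hy).
  assert (0 <= INR n) by apply pos_INR.
  assert (0 <= INR n * y) by nra.
  set (A := (1+y)^n) in *. set (z := INR n * y) in *.
  assert (A * (1 - z) <= 1) by (unfold z in *; nra).
  replace (2 * INR n * y) with (2 * z) by (unfold z; ring).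
  assert (1 <= (1 + 2*z) * (1 - z)) by nra.
  destruct (Rle_dec A (1+2*z)); auto.
  assert ((1+2*z)*(1-z) < A * (1-z)) by (apply Rmult_lt_compat_r; lra). lra.
Qed.

Lemma cv_const_le : forall (u : nat -> R) l t, Un_cv u l -> (forall n, u n <= t) -> l <= t.
Proof.
  intros u l t H Hu. destruct (Rle_dec l t) as [|Hn]; auto.
  destruct (H (l - t)) as [N HN]; [lra|].
  specialize (HN N (le_n N)). specialize (Hu N). unfold Rdist in HN.
  apply Rabs_def2 in HN. lra.
Qed.

Lemma hit_low1 beta (hb : 0 < beta) p : forall m j, (j + m = p + 1)%nat ->
  (beta / (beta+1)) ^ m <= hit_within beta p m 1 j.
Proof.
  pose proof (r_pos beta hb); pose proof (q_pos beta hb).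
  induction m; intros j Hj.
  - simpl. unfold is_target. replace (Nat.eqb j (p*1+1)) with true; [lra|].
    symmetry; apply Nat.eqb_eq; lia.
  - cbn [hit_within]. unfold is_target. replace (Nat.eqb j (p*1+1)) with false.
    2:{ symmetry; apply Nat.eqb_neq; lia. }
    pose proof (IHm (S j) ltac:(lia)). pose proof (hit_nonneg beta hb p m 2 j).
    simpl (_ ^ S m). nra.
Qed.

Lemma hit_S beta p N a b : hit_within beta p (S N) a b =
  if is_target p a b then 1 else / (beta + 1) * hit_within beta p N (S a) b
            + beta / (beta + 1) * hit_within beta p N a (S b).
Proof. reflexivity. Qed.

Lemma hit_low beta (hb : 0 < beta) p :
  beta / (beta+1) + / (beta+1) * (beta / (beta+1)) ^ S p <= hit_within beta p (S (S p)) 0 0.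
Proof.
  pose proof (r_pos beta hb); pose proof (q_pos beta hb).
  rewrite hit_S. replace (is_target p 0 0) with false by (unfold is_target; rewrite Nat.mul_0_r; reflexivity).
  assert (hit_within beta p (S p) 0 1 = 1).
  { destruct p; [reflexivity|]. rewrite hit_S; unfold is_target; rewrite Nat.mul_0_r; reflexivity. }
  rewrite H1. pose proof (hit_low1 beta hb p (S p) 0 ltac:(lia)). nra.
Qed.


Lemma x_eq beta (hb : 0 < beta) p : x_p beta p = / (beta+1) * (beta/(beta+1))^p.
Proof.
  unfold x_p, Rdiv. rewrite Rpow_mult_distr, pow_inv. simpl.
  assert ((beta+1)^p <> 0) by (apply pow_nonzero; lra). field; split; lra.
Qed.

Lemma lim_ex beta (hb : 0 < beta) p : {l | Un_cv (fun N => hit_within beta p N 0 0) l}.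
Proof.
  apply growing_cv; [intro n; apply hit_grow; auto|].
  exists 1. intros y [N ->].
  assert (H := hit_le_U beta hb p 1 ltac:(lra) ltac:(lra)).
  rewrite pow1, Rmult_1_r, Rplus_comm, rq1 in H by auto.
  eapply Rle_trans; [apply H; lra|]. unfold U; rewrite pow1; lra.
Qed.

Lemma bound_low beta (hb : 0 < beta) p l : Un_cv (fun N => hit_within beta p N 0 0) l ->
  beta/(beta+1) + beta/(beta+1) * x_p beta p <= l.
Proof.
  intro H. eapply Rle_trans; [|apply (growing_ineq _ _ (fun n => hit_grow beta hb p n 0 0) H (S (S p)))].
  eapply Rle_trans; [|apply hit_low; auto]. rewrite x_eq by auto. simpl (_ ^ S p). lra.
Qed.

Lemma bound_up beta (hb : 0 < beta) p l : Un_cv (fun N => hit_within beta p N 0 0) l ->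
  INR (S p) * x_p beta p <= 1/4 -> (beta/(beta+1))^p <= 1/2 ->
  l <= beta/(beta+1) + beta/(beta+1) * x_p beta p * (1 + 4 * INR (S p) * x_p beta p).
Proof.
  intros H H1 H2.
  pose proof (r_pos beta hb) as Hr; pose proof (q_pos beta hb) as Hq; pose proof (rq1 beta hb) as Hrq.
  set (q := beta/(beta+1)) in *. set (r := / (beta+1)) in *.
  assert (Hx : x_p beta p = r * q^p) by (apply x_eq; auto).
  set (x := x_p beta p) in *.
  assert (Hqp : 0 < q^p) by (apply pow_lt; lra).
  assert (Hx0 : 0 < x) by (rewrite Hx; nra).
  set (n := INR (S p)) in *.
  assert (Hn : 1 <= n) by (unfold n; rewrite S_INR; pose proof (pos_INR p); lra).
  set (d := 4 * n * x).
  assert (Hd : 0 <= d <= 1) by (unfold d; nra).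
  set (y := x * (1 + d)).
  set (t := q * (1 + y)).
  replace (q + q * x * (1 + 4 * n * x)) with t by (unfold t, y, d; ring).
  assert (Hq1 : q < 1) by lra.
  assert (Ht0 : 0 < t) by (unfold t, y; apply Rmult_lt_0_compat; nra).
  assert (Ht1 : t <= 1).
  { unfold t, y. assert (x * (1+d) <= 2 * x) by nra.
    assert (q * q^p <= 1/2) by nra.
    assert (q * (1 + x*(1+d)) <= q + 2 * q * x) by nra.
    assert (2 * q * x = 2 * r * (q * q^p)) by (rewrite Hx; ring).
    assert (2 * r * (q * q^p) <= r) by nra. lra. }
  assert (Hts : q + r * t ^ S p <= t).
  { unfold t. rewrite Rpow_mult_distr.
    assert (E : r * (q ^ S p * (1 + y) ^ S p) = q * x * (1+y)^S p) by (rewrite Hx; simpl; ring).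
    rewrite E.
    assert (Hy : 0 <= y) by (unfold y; nra).
    assert (Hny : INR (S p) * y <= 1/2). { fold n. replace (n*y) with ((n*x)*(1+d)) by (unfold y; ring). assert (0 <= n*x) by nra. nra. }
    pose proof (powup2 y (S p) Hy Hny) as P. fold n in P.
    assert (n * y <= d/2 * 1). { replace (n*y) with ((n*x)*(1+d)) by (unfold y; ring). replace (d/2*1) with ((n*x)*2) by (unfold d; field). assert (0 <= n*x) by nra. nra. }
    assert ((1+y)^S p <= 1 + d) by nra.
    assert (q * x * (1+y)^S p <= q * x * (1+d)) by (apply Rmult_le_compat_l; nra).
    replace (q * (1 + y)) with (q + q * x * (1 + d)) by (unfold y; ring). lra. }
  apply (cv_const_le _ _ _ H). intro N.
  eapply Rle_trans; [apply (hit_le_U beta hb p t Ht0 Ht1 Hts)|].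
  unfold U. rewrite Nat.mul_0_r. simpl. unfold t, y; lra.
Qed.


Lemma w_bound q (hq0 : 0 < q) (hq1 : q < 1) : exists C s, 0 < C /\ 0 < s < 1 /\
  forall n, INR (S n) * q ^ n <= C * s ^ n.
Proof.
  set (s := sqrt q).
  assert (Hs0 : 0 < s) by (apply sqrt_lt_R0; lra).
  assert (Hs1 : s < 1) by (unfold s; rewrite <- sqrt_1; apply sqrt_lt_1; lra).
  assert (Hss : s * s = q) by (apply sqrt_sqrt; lra).
  set (k := / s - 1).
  assert (Hk : 0 < k).
  { unfold k. assert (1 < / s). { rewrite <- Rinv_1. apply Rinv_lt_contravar; lra. } lra. }
  exists (1 + / k), s. split; [pose proof (Rinv_0_lt_compat k Hk); lra|]. split; [lra|].
  intro n. pose proof (poly n k Hk) as P.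
  replace (1 + k) with (/ s) in P by (unfold k; ring).
  rewrite pow_inv in P.
  assert (Hsn : 0 < s ^ n) by (apply pow_lt; lra).
  assert (A : s ^ n * (1 + INR n * k) <= 1).
  { apply Rmult_le_reg_r with (/ s^n). apply Rinv_0_lt_compat; lra.
    replace (s ^ n * (1 + INR n * k) * / s ^ n) with (1 + INR n * k) by (field; lra). lra. }
  assert (B : INR (S n) <= (1 + / k) * (1 + INR n * k)).
  { rewrite S_INR. replace ((1 + / k) * (1 + INR n * k)) with (1 + INR n * k + / k + INR n) by (field; lra).
    pose proof (pos_INR n); pose proof (Rinv_0_lt_compat k Hk); nra. }
  rewrite <- Hss, Rpow_mult_distr.
  assert (INR (S n) * s ^ n <= 1 + / k).
  { eapply Rle_trans. apply Rmult_le_compat_r; [lra|exact B].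
    pose proof (Rinv_0_lt_compat k Hk). nra. }
  nra.
Qed.

Lemma w_cv beta (hb : 0 < beta) : Un_cv (fun n => INR (S n) * x_p beta n) 0.
Proof.
  pose proof (r_pos beta hb) as Hr; pose proof (q_pos beta hb) as Hq; pose proof (rq1 beta hb).
  destruct (w_bound (beta/(beta+1)) Hq ltac:(lra)) as [C [s [HC [Hs HB]]]].
  intros e He.
  destruct (pow_lt_1_zero s ltac:(rewrite Rabs_right; lra) (e / (C * / (beta+1)))) as [N HN].
  { apply Rdiv_lt_0_compat; nra. }
  exists N. intros n Hn. specialize (HN n Hn). specialize (HB n).
  rewrite Rabs_right in HN by (left; apply pow_lt; lra).
  unfold Rdist. rewrite Rminus_0_r. rewrite x_eq by auto.
  assert (0 <= INR (S n) * (/ (beta + 1) * (beta / (beta + 1)) ^ n)).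
  { pose proof (pos_INR (S n)). pose proof (pow_lt (beta/(beta+1)) n Hq). apply Rmult_le_pos; [lra|]. apply Rmult_le_pos; lra. }
  rewrite Rabs_right by lra.
  replace (INR (S n) * (/ (beta + 1) * (beta / (beta + 1)) ^ n)) with (/(beta+1) * (INR (S n) * (beta / (beta + 1)) ^ n)) by ring.
  apply Rle_lt_trans with (/(beta+1) * (C * s^n)). apply Rmult_le_compat_l; lra.
  apply Rmult_lt_compat_l with (r := C * / (beta+1)) in HN; [|nra].
  replace (C * / (beta + 1) * (e / (C * / (beta + 1)))) with e in HN by (field; split; lra).
  lra.
Qed.


Theorem mainTheorem10 (beta : R) (hbeta : 0 < beta) :
  exists eps : nat -> R,
    Un_cv eps 0 /\
    forall p : nat, (1 <= p)%nat ->
      Phi_is beta p (beta / (beta + 1) * (1 + x_p beta p) + x_p beta p * eps p).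
Proof.
  pose proof (r_pos beta hbeta) as Hr; pose proof (q_pos beta hbeta) as Hq; pose proof (rq1 beta hbeta) as Hrq.
  assert (Hx0 : forall p, 0 < x_p beta p).
  { intro p. rewrite x_eq by auto. pose proof (pow_lt _ p Hq). nra. }
  exists (fun p => (proj1_sig (lim_ex beta hbeta p) - beta/(beta+1) * (1 + x_p beta p)) / x_p beta p).
  split.
  - intros e He.
    set (m := Rmin (1/4) (Rmin (1/(2*(beta+1))) (e/4))).
    assert (Hm : 0 < m).
    { unfold m. apply Rmin_pos; [lra|]. apply Rmin_pos; [|lra]. apply Rdiv_lt_0_compat; lra. }
    assert (Hm1 : m <= 1/4) by apply Rmin_l.
    assert (Hm2 : m <= 1/(2*(beta+1))) by (eapply Rle_trans; [apply Rmin_r|apply Rmin_l]).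
    assert (Hm3 : m <= e/4) by (eapply Rle_trans; [apply Rmin_r|apply Rmin_r]).
    destruct (w_cv beta hbeta m Hm) as [N HN].
    exists N. intros n Hn. specialize (HN n Hn).
    unfold Rdist in *. rewrite Rminus_0_r in *.
    destruct (lim_ex beta hbeta n) as [l Hl]. simpl.
    pose proof (Hx0 n) as Hxn.
    set (q := beta / (beta+1)) in *. set (x := x_p beta n) in *.
    assert (Hw0 : 0 <= INR (S n) * x) by (pose proof (pos_INR (S n)); apply Rmult_le_pos; lra).
    rewrite Rabs_right in HN by lra.
    assert (Hn1 : 1 <= INR (S n)) by (rewrite S_INR; pose proof (pos_INR n); lra).
    assert (Hqn : q ^ n <= 1/2).
    { assert (x = / (beta+1) * q^n) by (apply x_eq; auto).
      assert (x <= 1/(2*(beta+1))) by nra.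
      assert (q^n = (beta+1) * x) by (rewrite H; field; lra).
      rewrite H1. apply Rmult_le_reg_l with (/(beta+1)); [lra|].
      replace (/ (beta+1) * ((beta+1) * x)) with x by (field; lra).
      replace (/ (beta + 1) * (1/2)) with (1/(2*(beta+1))) by (field; lra). lra. }
    pose proof (bound_low beta hbeta n l Hl) as L.
    pose proof (bound_up beta hbeta n l Hl ltac:(fold x; lra) Hqn) as Up. fold q x in L, Up.
    assert (E1 : 0 <= (l - q * (1 + x)) / x).
    { unfold Rdiv; apply Rmult_le_pos; [lra|]. left; apply Rinv_0_lt_compat; lra. }
    assert (E2 : (l - q * (1 + x)) / x <= q * (4 * (INR (S n) * x))).
    { apply Rmult_le_reg_r with x; [lra|]. unfold Rdiv. rewrite Rmult_assoc, Rinv_l by lra.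
      nra. }
    rewrite Rabs_right by lra.
    assert (q * (4 * (INR (S n) * x)) <= 4 * (INR (S n) * x)) by nra.
    lra.
  - intros p Hp. unfold Phi_is. destruct (lim_ex beta hbeta p) as [l Hl]. simpl.
    replace (beta / (beta + 1) * (1 + x_p beta p) +
             x_p beta p * ((l - beta / (beta + 1) * (1 + x_p beta p)) / x_p beta p)) with l.
    exact Hl. field. pose proof (Hx0 p); lra.
Qed.
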